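(* Let $(c_1,\dots,c_m)\in\mathbb{C}^m$ be such that $\prod_{j=1}^m\eta(c_j)$ is a scalar multiple of the identity matrix. Then there are two different indices $j,k\in\{1,\dots,m\}$ with $|c_j|<2$ and $|c_k|<2$.
   Context: For $c\in\mathbb{C}$, $\eta(c)=\begin{pmatrix}c&-1\\1&0\end{pmatrix}$. *)

(* Defs.v *)
(* C is modelled by an arbitrary numClosedFieldType. *)
From HB Require Import structures.
From mathcomp Require Import all_boot all_order all_algebra.
Set Implicit Arguments. Unset Strict Implicit. Unset Printing Implicit Defensive.
Import Order.TTheory GRing.Theory Num.Theory.
Local Open Scope ring_scope.

(* eta(c) = [[c, -1], [1, 0]] *)
Definition eta_mx (C : numClosedFieldType) (c : C) : 'M[C]_2 :=
  \matrix_(i < 2, j < 2)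
    (if (val i == 0%N) && (val j == 0%N) then c
     else if (val i == 0%N) then -1
     else if (val j == 0%N) then 1 else 0).

(* Main.v *)
Require Import Defs.
From HB Require Import structures.
From mathcomp Require Import all_boot all_order all_algebra.
Import Order.TTheory GRing.Theory Num.Theory.
Local Open Scope ring_scope.

Section Aux.
Variable C : numClosedFieldType.

Definition inv_eta (c : C) : 'M[C]_2 :=
  \matrix_(i < 2, j < 2)
    (if (val i == 0%N) && (val j == 0%N) then 0
     else if (val i == 0%N) then 1
     else if (val j == 0%N) then -1 else c).

Lemma mul2E (A B : 'M[C]_2) i j : (A * B) i j = A i 0 * B 0 j + A i 1 * B 1 j.
Proof.
rewrite -mulmxE mxE big_ord_recl big_ord_recl big_ord0 addr0.
have -> : lift ord0 (ord0 : 'I_1) = 1 :> 'I_2 by apply: val_inj.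
by [].
Qed.

Lemma eta_unit (c : C) : eta_mx c \in unitmx.
Proof.
apply: (@intro_unitmx _ _ _ (inv_eta c)); rewrite !mulmxE; split;
apply/matrixP => i j; rewrite mul2E !mxE;
case: i => [[|[|i]] Hi] //; case: j => [[|[|j]] Hj] //=; 
rewrite ?mulr0 ?mul0r ?mulr1 ?mul1r ?addr0 ?add0r ?mulrN1 ?mulN1r ?opprK ?subrr ?addNr //.
Qed.

Lemma prod_unit (s : seq nat) (d : nat -> C) :
  \prod_(i <- s) eta_mx (d i) \in unitmx.
Proof.
elim: s => [|x s IH]; first by rewrite big_nil unitmx1.
by rewrite big_cons -mulmxE unitmx_mul eta_unit IH.
Qed.

Lemma step (c : C) (X : 'M[C]_2) :
  2 <= `|c| -> `|X 1 0| < `|X 0 0| ->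
  `|(eta_mx c * X) 1 0| < `|(eta_mx c * X) 0 0|.
Proof.
move=> Hc HX.
rewrite !mul2E !mxE /= mulNr mul1r mul0r addr0 mul1r -/(_ - _).
have H1 : `|X 0 0| < 2 * `|X 0 0| - `|X 1 0|.
  rewrite mulr2n -/(_ *+ 2) ?mulr2n.
  by rewrite (mulrDl 1 1) mul1r -addrA ltrDl subr_gt0.
apply: (lt_le_trans H1); apply: le_trans (lerB_dist _ _).
by rewrite normrM lerB // ler_wpM2r.
Qed.

Lemma steps (s : seq nat) (d : nat -> C) (X : 'M[C]_2) :
  (forall i, i \in s -> 2 <= `|d i|) -> `|X 1 0| < `|X 0 0| ->
  `|((\prod_(i <- s) eta_mx (d i)) * X) 1 0| <
  `|((\prod_(i <- s) eta_mx (d i)) * X) 0 0|.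
Proof.
elim: s => [|x s IH] Hs HX; first by rewrite big_nil mul1r.
rewrite big_cons -mulrA; apply: step; first by apply: Hs; rewrite inE eqxx.
by apply: IH => // i Hi; apply: Hs; rewrite inE Hi orbT.
Qed.

End Aux.

Definition Wm (C : numClosedFieldType) : 'M[C]_2 :=
  \matrix_(i < 2, j < 2) (if (val i == 1%N) && (val j == 0%N) then -1 else 0).

Theorem corollary3p3 (C : numClosedFieldType) (m : nat) (c : 'I_m -> C) :
  (0 < m)%N ->
  (exists a : C, \prod_(j < m) eta_mx (c j) = a%:M) ->
  exists j k : 'I_m, [/\ j != k, `|c j| < 2 & `|c k| < 2].
Proof.
move=> Hm [a Ha]; case: m c Hm Ha => [|n] c // _ Ha.
have notsmall : forall k, ~~ (`|c k| < 2) -> 2 <= `|c k|.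
  by move=> k Hk; rewrite real_leNgt ?realn ?normr_real.
have [[p Hp]|//] : (exists p : 'I_n.+1, forall j, j != p -> 2 <= `|c j|) \/
    exists j k : 'I_n.+1, [/\ j != k, `|c j| < 2 & `|c k| < 2].
  case: (boolP [exists j, `|c j| < 2]) => [/existsP [p Hp]|/existsP Hn].
    case: (boolP [exists k, (k != p) && (`|c k| < 2)]) => [/existsP [k /andP [Hk1 Hk2]]|/existsP Hn].
      by right; exists k, p.
    left; exists p => j Hj; apply: notsmall; apply/negP => Hs; apply: Hn; exists j.
    by rewrite Hj Hs.
  left; exists ord0 => j _; apply: notsmall; apply/negP => Hs; apply: Hn; by exists j.
exfalso.
pose G i := eta_mx (c (inord i)).
have E : \prod_(j < n.+1) eta_mx (c j) = \prod_(0 <= i < n.+1) G i.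
  by rewrite big_mkord; apply: eq_bigr => j _; rewrite /G inord_val.
rewrite E (@big_cat_nat _ _ _ p) // ?(ltnW (ltn_ord p)) // (big_ltn (ltn_ord p)) in Ha.
set P := \prod_(0 <= i < p) G i in Ha.
set Q := \prod_(p.+1 <= i < n.+1) G i in Ha.
have HQ : Q \is a GRing.unit by apply: prod_unit.
have H2 : (Q * P * G p) * Q = a%:M * Q.
  by rewrite -!mulrA Ha -!mulmxE scalar_mxC.
have H3 := mulIr HQ H2.
have HQP : Q * P = \prod_(i <- index_iota p.+1 n.+1 ++ index_iota 0 p) G i.
  by rewrite big_cat.
have := @steps C (index_iota p.+1 n.+1 ++ index_iota 0 p) (fun i => c (inord i)) (G p * Wm C).
rewrite -HQP mulrA H3.
rewrite !mul2E !mxE /= !(mulr0, mul0r, mulr1n, mulr0n, addr0, add0r, mulrN1, opprK, normr0, normr1) normr_lt0.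
move=> H; have //: false; apply: H => [i|]; last by rewrite ltr01.
rewrite mem_cat !mem_index_iota => Hi; apply: Hp; apply/eqP => Hip.
have Hin : (i < n.+1)%N by case/orP: Hi => /andP [H4 H5] //; apply: ltn_trans H5 (ltn_ord p).
have := congr1 val Hip; rewrite /= inordK // => Hv; subst i.
by case/orP: Hi => /andP [H6 H7]; move: H6 H7; rewrite ?leqnn ?ltnn.
Qed.
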